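(* Let $n\geq 2$. For every $1\leq k\leq \lceil n/2\rceil-1$, the complete graph $K_n$ is not strong $k$-cop-win. Moreover, $K_n$ is strong $\lceil n/2\rceil$-cop-win and $\lim_{m\to\infty}\mathrm{capt}_{\lceil n/2\rceil}(K_n,m)=1$.
   Context: All graphs are finite, simple, connected and reflexive (a player may stay in place). The game of $k$ cops and $m$ robbers on $G$: in round 0 the cops first choose starting vertices, then the robbers choose theirs. In each round $i\geq 1$, all $k$ cops move (each to an adjacent vertex or staying), then all $m$ robbers move likewise. Several players may occupy the same vertex. Whenever a cop and some robbers occupy the same vertex, those robbers are captured and take no further part in the game. Both sides have full information. The cops win if all robbers are captured after finitely many rounds. $G$ is $k$-cop-win if $k$ cops can always win against one robber. For a $k$-cop-win graph $G$, $\mathrm{capt}_k(G,m)$ is the index of the round in which the last robber is captured when $k$ cops play to minimize this index and $m$ robbers play to maximize it. $G$ is strong $k$-cop-win if $\lim_{m\to\infty}\mathrm{capt}_k(G,m)$ exists (and is finite). *)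

(* Defs.v *)
From mathcomp Require Import all_boot.
From Stdlib Require Import Reals ClassicalEpsilon.
Set Implicit Arguments. Unset Strict Implicit. Unset Printing Implicit Defensive.

(* A graph is given by a finite vertex type V and an adjacency relation
   [adj : rel V]; [adj x y] means a player at x may move to y in one step
   (graphs are reflexive, so staying put corresponds to [adj x x]). *)

(* Positions of k cops, and state of m robbers (None = captured). *)
Definition copPos (V : finType) (k : nat) := {ffun 'I_k -> V}.
Definition robState (V : finType) (m : nat) := {ffun 'I_m -> option V}.

Definition occupied (V : finType) k (c : copPos V k) (v : V) : Prop :=
  exists i, c i = v.

Definition all_captured (V : finType) m (R : robState V m) : Prop :=
  forall j, R j = None.

Definition cop_move (V : finType) (adj : rel V) k (c c' : copPos V k) : Prop :=
  forall i, adj (c i) (c' i).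

Definition survives (V : finType) k m (c' : copPos V k) (R : robState V m)
  (j : 'I_m) (v : V) : Prop :=
  R j = Some v /\ ~ occupied c' v.

(* a legal move of all surviving robbers (captured robbers' entries ignored) *)
Definition rob_move (V : finType) (adj : rel V) k m (c' : copPos V k)
  (R : robState V m) (r' : {ffun 'I_m -> V}) : Prop :=
  forall j v, survives c' R j v -> adj v (r' j).

Definition rob_step (V : finType) k m (c' : copPos V k) (R : robState V m)
  (r' : {ffun 'I_m -> V}) : robState V m :=
  [ffun j => match R j with
             | Some v =>
                 if excluded_middle_informative (occupied c' v) then None
                 else if excluded_middle_informative (occupied c' (r' j))
                      then None else Some (r' j)
             | None => None
             end].

(* [guar adj t c R]: from the state at the end of some round (cops at c,
   robbers R), the cops can guarantee that all robbers are captured within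
   at most t further rounds, whatever the robbers do. *)
Fixpoint guar (V : finType) (adj : rel V) k m (t : nat) (c : copPos V k)
  (R : robState V m) : Prop :=
  match t with
  | 0 => all_captured R
  | t'.+1 => all_captured R \/
      exists c', cop_move adj c c' /\
        forall r', rob_move adj c' R r' -> guar adj t' c' (rob_step c' R r')
  end.

(* round 0: cops place, then robbers place; robbers placed on a cop are
   captured *)
Definition init_state (V : finType) k m (c0 : copPos V k)
  (r0 : {ffun 'I_m -> V}) : robState V m :=
  [ffun j => if excluded_middle_informative (occupied c0 (r0 j)) then None
             else Some (r0 j)].

Definition capt_le (V : finType) (adj : rel V) (k m t : nat) : Prop :=
  exists c0 : copPos V k, forall r0 : {ffun 'I_m -> V},
    guar adj t c0 (init_state c0 r0).

Definition cop_win (V : finType) (adj : rel V) (k : nat) : Prop :=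
  exists t, capt_le adj k 1 t.

(* capt_k(G,m): the minimax capture round = least t with capt_le t
   (chosen classically; meaningful whenever such t exists) *)
Definition capt (V : finType) (adj : rel V) (k m : nat) : nat :=
  epsilon (inhabits 0%N)
    (fun t => capt_le adj k m t /\ forall t', capt_le adj k m t' -> (t <= t')%N).

Definition capt_limit_is (V : finType) (adj : rel V) (k : nat) (L : R) : Prop :=
  Un_cv (fun m => INR (capt adj k m)) L.

Definition strong_cop_win (V : finType) (adj : rel V) (k : nat) : Prop :=
  cop_win adj k /\ exists L : R, capt_limit_is adj k L.

Definition Kn_adj (n : nat) : rel 'I_n := fun _ _ => true.
Arguments Kn_adj : clear implicits.

(* Main.v *)
Require Import Defs.
From mathcomp Require Import all_boot.
From Stdlib Require Import Reals.
From Stdlib Require Import ClassicalEpsilon Lra.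
From mathcomp Require Import zify.
Set Implicit Arguments. Unset Strict Implicit.

Lemma occP (V:finType) k (c: copPos V k) v : occupied c v <-> v \in codom c.
Proof. split => [[i <-]|/codomP [i ->]]; [exact: codom_f | by exists i]. Qed.

Lemma cardB n k (c : copPos 'I_n k) : (#|[set c i | i in 'I_k]| <= k)%N.
Proof. by apply: leq_trans (leq_imset_card _ _) _; rewrite card_ord. Qed.

Lemma occB n k (c : copPos 'I_n k) v : occupied c v <-> v \in [set c i | i in 'I_k].
Proof. split => [[i <-]|/imsetP [i _ ->]]; [exact: imset_f | by exists i]. Qed.

Lemma pigeon n k (c : copPos 'I_n k) (g : 'I_k.+1 -> 'I_n) :
  injective g -> exists i, ~ occupied c (g i).
Proof.
move=> gi; case: (pickP (fun i => g i \notin [set c i | i in 'I_k])) => [i Hi | H].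
  by exists i; rewrite occB; apply/negP.
have : ([set g i | i in 'I_k.+1] \subset [set c i | i in 'I_k]).
  apply/subsetP => v /imsetP [i _ ->]; by move/negbFE: (H i).
move/subset_leq_card; rewrite card_imset // card_ord => h.
have := leq_trans h (cardB c); by rewrite ltnn.
Qed.

Lemma free_vertices n k (c : copPos 'I_n k) : (2*k+1 <= n)%N ->
  exists g : 'I_k.+1 -> 'I_n, injective g /\ forall i, ~ occupied c (g i).
Proof.
move=> hk; set B := [set c i | i in 'I_k]; set A := ~: B.
have cA : (k.+1 <= #|A|)%N.
  have := cardsC B; rewrite card_ord -/A => e. have := cardB c. rewrite -/B. lia.
exists (fun i => enum_val (A:=A) (widen_ord cA i)); split.
  move=> i j /enum_val_inj /(congr1 val) /= e; exact: val_inj.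
move=> i; rewrite occB -/B.
have := enum_valP (widen_ord cA i); by rewrite inE => /negP.
Qed.

Definition Inv n k m t (R : robState 'I_n m) : Prop :=
  exists g : 'I_k.+1 -> 'I_n, injective g /\
  exists h : 'I_k.+1 -> t.-tuple 'I_k.+1 -> 'I_m,
    (forall i, injective (h i)) /\ forall i a, R (h i a) = Some (g i).

Lemma noguar n k m (hk : (2*k+1 <= n)%N) t :
  forall (c : copPos 'I_n k) (R : robState 'I_n m), Inv k t R -> ~ guar (Kn_adj n) t c R.
Proof.
elim: t => [|t IH] c R [g [gi [h [hi hR]]]] /=.
  by move/(_ (h ord0 [tuple])); rewrite hR.
case=> [Hall | [c' [_ Hr]]].
  by move: (Hall (h ord0 [tuple ord0 | i < t.+1])); rewrite hR.
have [i0 Hi0] := pigeon c' gi.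
have [g' [g'i Hg']] := free_vertices c' hk.
pose r' : {ffun 'I_m -> 'I_n} :=
  [ffun j => if [pick a | h i0 a == j] is Some a then g' (thead a) else g' ord0].
apply: (IH c' (rob_step c' R r')); last by apply: Hr.
exists g'; split => //.
exists (fun (i : 'I_k.+1) (b : t.-tuple 'I_k.+1) => h i0 [tuple of i :: b]); split.
  move=> i b b' e; have := hi i0 _ _ e; move/(congr1 val) => /= [e']; exact: val_inj.
move=> i b; rewrite ffunE hR.
destruct (excluded_middle_informative (occupied c' (g i0))) as [H0|H0]; first by [].
have -> : r' (h i0 [tuple of i :: b]) = g' i.
  rewrite ffunE; case: pickP => [a /eqP /hi -> | H]; first by rewrite theadE.
  by move: (H [tuple of i :: b]); rewrite eqxx.
rewrite /=.
destruct (excluded_middle_informative (occupied c' (g' i))) as [H1|H1]; first by case: (Hg' i).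
by [].
Qed.

Lemma init_inv n k m t (c0 : copPos 'I_n k) (hk : (2*k+1 <= n)%N)
  (hm : (expn k.+1 t.+1 <= m)%N) : exists r0 : {ffun 'I_m -> 'I_n}, Inv k t (init_state c0 r0).
Proof.
have [g [gi Hg]] := free_vertices c0 hk.
pose P := ('I_k.+1 * t.-tuple 'I_k.+1)%type.
have hP : (#|{: P}| <= m)%N by rewrite card_prod (card_tuple t) !card_ord -expnS.
pose emb := fun p : P => widen_ord hP (enum_rank p).
have embi : injective emb.
  move=> p q /(congr1 val) /= e; apply: enum_rank_inj; exact: val_inj.
exists [ffun j => if [pick p | emb p == j] is Some p then g p.1 else g ord0].
exists g; split => //; exists (fun i a => emb (i, a)); split.
  by move=> i a b /embi [].
move=> i a; rewrite !ffunE.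
have -> : (if [pick p | emb p == emb (i, a)] is Some p then g p.1 else g ord0) = g i.
  case: pickP => [p /eqP /embi -> // | H].
  by move: (H (i, a)); rewrite eqxx.
destruct (excluded_middle_informative (occupied c0 (g i))) as [H1|H1]; first by case: (Hg i).
by [].
Qed.

Lemma lower n k m t (hk : (2*k+1 <= n)%N) :
  (expn k.+1 t.+1 <= m)%N -> ~ capt_le (Kn_adj n) k m t.
Proof.
move=> hm [c0 Hc]. have [r0 Hr] := init_inv c0 hk hm.
exact: (noguar hk Hr (Hc r0)).
Qed.

Lemma guar_up n k m (hk : (0 < k)%N) t : forall (c : copPos 'I_n k) (R : robState 'I_n m),
  (#|[set j | R j != None]| <= t)%N -> guar (Kn_adj n) t c R.
Proof.
elim: t => [|t IH] c R /=.
  rewrite leqn0 => /eqP /card0_eq H j.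
  by move: (H j); rewrite !inE => /negbFE /eqP.
move=> Hc.
case: (pickP (fun j => R j != None)) => [j Hj | H]; last first.
  by left => j; move/negbFE: (H j) => /eqP.
right. case Ej: (R j) Hj => [v|] // _.
exists [ffun _ => v]; split => // r' _.
apply: IH.
have Hsub : [set j0 | rob_step [ffun _ : 'I_k => v] R r' j0 != None] \subset
            [set j0 | R j0 != None] :\ j.
  apply/subsetP => j0; rewrite !inE ffunE.
  case Ej0: (R j0) => [w|]; last by [].
  destruct (excluded_middle_informative (occupied [ffun _ : 'I_k => v] w)) as [H1|H1]; first by [].
  move=> _; apply/andP; split => //.
  apply/eqP => e; subst j0. apply: H1. rewrite Ej in Ej0; case: Ej0 => <-.
  by exists (Ordinal hk); rewrite ffunE.
apply: leq_trans (subset_leq_card Hsub) _.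
have := cardsD1 j [set j0 | R j0 != None]; rewrite {1}inE Ej /= => e.
lia.
Qed.

Lemma capt_spec (V : finType) (adj : rel V) k m t0 : capt_le adj k m t0 ->
  capt_le adj k m (capt adj k m) /\ forall t', capt_le adj k m t' -> (capt adj k m <= t')%N.
Proof.
move=> H0; rewrite /capt; apply epsilon_spec.
pose P := fun t => if excluded_middle_informative (capt_le adj k m t) then true else false.
have ex : exists t, P t.
  by exists t0; rewrite /P; case: excluded_middle_informative.
case: (ex_minnP ex) => t Pt Hmin; exists t; split.
  by move: Pt; rewrite /P; case: excluded_middle_informative.
move=> t' H; apply: Hmin; rewrite /P; by case: excluded_middle_informative.
Qed.

Lemma upper n k m (hn : (0 < n)%N) (hk : (0 < k)%N) : capt_le (Kn_adj n) k m m.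
Proof.
exists [ffun _ => Ordinal hn] => r0; apply: guar_up => //.
by apply: leq_trans (max_card _) _; rewrite card_ord.
Qed.

Lemma half_one n m (hn : (2 <= n)%N) : capt_le (Kn_adj n) (uphalf n) m 1.
Proof.
set k := uphalf n.
have hk2 : (n <= 2 * k)%N by rewrite /k uphalf_half; have := odd_double_half n; lia.
clearbody k; case: n hn k hk2 => [//|n'] hn k hk2.
exists [ffun i : 'I_k => inord i] => r0 /=; right.
exists [ffun i : 'I_k => inord (i + k)]; split => // r' _ j.
rewrite !ffunE.
case: (excluded_middle_informative (occupied [ffun i : 'I_k => inord i : 'I_n'.+1] (r0 j))) => [H|H] //=.
have : occupied [ffun i : 'I_k => inord (i + k) : 'I_n'.+1] (r0 j).
  have hv := ltn_ord (r0 j).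
  case: (ltnP (r0 j) k) => hvk.
    case: H; exists (Ordinal hvk); rewrite ffunE; apply: val_inj => /=; exact: inordK.
  have hi : (r0 j - k < k)%N by lia.
  exists (Ordinal hi); rewrite ffunE; apply: val_inj => /=; rewrite inordK subnK //.
move=> H2.
by case: (excluded_middle_informative (occupied [ffun i : 'I_k => inord (i + k) : 'I_n'.+1] (r0 j))).
Qed.

Lemma half_not0 n m (hn : (2 <= n)%N) (hm : (0 < m)%N) : ~ capt_le (Kn_adj n) (uphalf n) m 0.
Proof.
set k := uphalf n.
have hk : (k < n)%N by rewrite /k uphalf_half; have := odd_double_half n; lia.
clearbody k; case: n hn k hk => [//|n'] hn k hk [c0 Hc].
have gi : injective (fun i : 'I_k.+1 => inord i : 'I_n'.+1).
  move=> a b /(congr1 val) /=; rewrite !inordK ?(leq_trans (ltn_ord _) hk) // => e; exact: val_inj.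
have [i Hi] := pigeon c0 gi.
move: (Hc [ffun _ => inord i] (Ordinal hm)) => /=; rewrite !ffunE.
by case: excluded_middle_informative.
Qed.

Theorem mainTheorem15 (n : nat) (hn : (2 <= n)%N) :
  (forall k : nat, (1 <= k)%N -> (k <= uphalf n - 1)%N ->
     ~ strong_cop_win (Kn_adj n) k) /\
  strong_cop_win (Kn_adj n) (uphalf n) /\
  capt_limit_is (Kn_adj n) (uphalf n) (INR 1).
Proof.
have lim : capt_limit_is (Kn_adj n) (uphalf n) (INR 1).
  move=> eps heps; exists 1%nat => m /leP hm.
  have [H1 H2] := capt_spec (half_one m hn).
  have e : capt (Kn_adj n) (uphalf n) m = 1%N.
    apply/eqP; rewrite eqn_leq (H2 1%N (half_one m hn)) /=.
    case E: (capt _ _ _) H1 => [|//] H1.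
    by case: (half_not0 hn hm H1).
  by rewrite e /R_dist Rminus_diag Rabs_R0.
split; last by split => //; split; [exists 1%N; exact: half_one | exists (INR 1)].
move=> k hk1 hk2 [_ [L HL]].
have hk : (2*k+1 <= n)%N by move: hk2; rewrite uphalf_half; have := odd_double_half n; lia.
have [N HN] := HL 1%R Rlt_0_1.
have [t Ht] := INR_unbounded L.
set m := (N + expn k.+1 t.+1)%N.
have [H1 H2] := capt_spec (@upper n k m ltac:(lia) hk1).
have Hm := HN m ltac:(apply/leP; rewrite /m; lia).
have ct : (t < capt (Kn_adj n) k m)%N.
  rewrite ltnNge; apply/negP => hle.
  apply: (lower (t := capt (Kn_adj n) k m) hk) H1.
  apply: leq_trans (leq_pexp2l (m := k.+1) (n2 := t.+1) _ _) _; [done | by rewrite ltnS | rewrite /m; lia].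
have : (INR t.+1 <= INR (capt (Kn_adj n) k m))%R by apply: le_INR; apply/leP.
rewrite S_INR; move: Hm; rewrite /R_dist => /Rabs_def2 [ha hb] hc.
lra.
Qed.
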